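(* Let $\phi\ge1$. Consider a knapsack instance with arbitrary profits $p_1,\ldots,p_n\in\mathbb{R}_{\ge0}$ in which each weight $w_i$ is chosen uniformly at random from an arbitrary interval $A_i\subseteq[0,1]$ of length $1/\phi$, independently of the other weights, and let $\mathcal{P}$ be the set of Pareto-optimal solutions. For $k\in\mathbb{N}$ and $i\in\{0,\ldots,k-1\}$ let $I_i^k=(ni/k,\,n(i+1)/k]$, call $I_i^k$ non-empty if there is $x\in\mathcal{P}$ with $w^{\mathsf T}x\in I_i^k$, and let $X^k$ be the number of non-empty intervals $I_i^k$ plus one. Then for every $k\in\mathbb{N}$, $\mathbb{E}[X^k]\le n^2\phi+1$.
   Context: Solutions are vectors $x\in\{0,1\}^n$. A solution $y$ dominates $x$ if $p^{\mathsf T}y\ge p^{\mathsf T}x$ and $w^{\mathsf T}y\le w^{\mathsf T}x$ with at least one inequality strict; $x$ is Pareto-optimal if no solution dominates it. *)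

(* Defs.v *)
From HB Require Import structures.
From mathcomp Require Import all_boot all_order all_algebra.
From mathcomp Require Import all_classical all_reals all_analysis.
Set Implicit Arguments. Unset Strict Implicit. Unset Printing Implicit Defensive.
Import Order.TTheory GRing.Theory Num.Theory.
Local Open Scope ring_scope.
Local Open Scope classical_set_scope.

Section Knapsack.
Variable R : realType.
Variable n : nat.

Definition sol := {ffun 'I_n -> bool}.

(* p^T x and w^T x, with p, w given as real sequences (only indices < n matter). *)
Definition dotp (v : nat -> R) (x : sol) : R := \sum_(i < n) (x i)%:R * v i.

Definition dominates (p w : nat -> R) (y x : sol) : bool :=
  [&& dotp p x <= dotp p y, dotp w y <= dotp w x &
      (dotp p x < dotp p y) || (dotp w y < dotp w x)].

Definition pareto_optimal (p w : nat -> R) (x : sol) : bool :=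
  [forall y : sol, ~~ dominates p w y x].

Definition interval_nonempty (p w : nat -> R) (k : nat) (i : nat) : bool :=
  [exists x : sol, pareto_optimal p w x &&
     ((n * i)%:R / k%:R < dotp w x) && (dotp w x <= (n * i.+1)%:R / k%:R)].

Definition Xk (p w : nat -> R) (k : nat) : nat :=
  #|[set i : 'I_k | interval_nonempty p w k i]| + 1.

Fixpoint iter_int (a : nat -> R) (len : R) (m : nat)
    (F : (nat -> R) -> \bar R) (w : nat -> R) : \bar R :=
  match m with
  | 0 => F w
  | m'.+1 => (\int[lebesgue_measure]_(t in `[a m', (a m' + len)%R])
               iter_int a len m' F (fun j => if j == m' then t else w j))%E
  end.

(* Expectation of F(w) when w_0, ..., w_{n-1} are independent and w_j is
   uniform on [a j, a j + 1/phi] (density phi on each coordinate). *)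
Definition expect_unif (a : nat -> R) (phi : R) (F : (nat -> R) -> \bar R) : \bar R :=
  ((phi ^+ n)%:E * iter_int a phi^-1 n F (fun _ => 0%R))%E.

End Knapsack.

(* Main.v *)
Require Import Defs.
From HB Require Import structures.
From mathcomp Require Import all_boot all_order all_algebra.
From mathcomp Require Import all_classical all_reals all_analysis.
From mathcomp Require Import measurable_realfun.
From mathcomp Require Import ring lra.
Import Order.TTheory GRing.Theory Num.Theory.
Local Open Scope ring_scope.

Module PilA.
Import Order.TTheory GRing.Theory Num.Theory.
Set Implicit Arguments. Unset Strict Implicit. Unset Printing Implicit Defensive.
Local Open Scope ring_scope.
Local Open Scope classical_set_scope.

Section WSpace.
Variable R : realType.
Definition W := nat -> R.
HB.instance Definition _ := Choice.copy W (nat -> R).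
HB.instance Definition _ := isPointed.Build W (fun _ => 0).
Definition Wmeas : set (set W) :=
  <<s \bigcup_(i in [set: nat]) preimage_set_system [set: W] (fun w : W => w i) measurable >>.
Let W_set0 : Wmeas set0. Proof. exact: sigma_algebra0. Qed.
Let W_setC A : Wmeas A -> Wmeas (~` A). Proof. exact: sigma_algebraC. Qed.
Let W_bigcup (F : _^nat) : (forall i, Wmeas (F i)) -> Wmeas (\bigcup_i (F i)).
Proof. exact: sigma_algebra_bigcup. Qed.
HB.instance Definition _ := @isMeasurable.Build default_measure_display W Wmeas W_set0 W_setC W_bigcup.

Lemma measurable_coord i : measurable_fun [set: W] (fun w : W => w i).
Proof.
move=> _ Y mY; rewrite setTI; apply: sub_sigma_algebra.
by exists i => //; exists Y => //; rewrite setTI.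
Qed.

Lemma measurable_toW d (T : measurableType d) (D : set T) (f : T -> W) :
  measurable D -> (forall i, measurable_fun D (fun x => f x i)) -> measurable_fun D f.
Proof.
move=> mD mf; apply: (@measurability _ _ _ W D f (\bigcup_(i in [set: nat]) preimage_set_system [set: W] (fun w : W => w i) measurable)) => //.
move=> _ [_ [i _ [Y mY <-]] <-].
rewrite setTI.
have -> : f @^-1` ((fun w : W => w i) @^-1` Y) = (fun x => f x i) @^-1` Y by [].
exact: mf.
Qed.

Definition upd (w : nat -> R) (j : nat) (t : R) : nat -> R :=
  fun l => if l == j then t else w l.

Lemma measurable_upd j : measurable_fun [set: (W * R)%type] (fun p : W * R => (upd p.1 j p.2 : W)).
Proof.
apply: measurable_toW => // i; rewrite /upd.
case: (i == j); first exact: measurable_snd.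
exact: (measurableT_comp (measurable_coord i) measurable_fst).
Qed.

Lemma measurable_upd1 (w : W) j : measurable_fun [set: R] (fun t => (upd w j t : W)).
Proof.
apply: measurable_toW => // i; rewrite /upd.
by case: (i == j) => //; exact: measurable_cst.
Qed.

End WSpace.

End PilA.
Import PilA.

Module PilB.
Import Order.TTheory GRing.Theory Num.Theory.
Set Implicit Arguments. Unset Strict Implicit. Unset Printing Implicit Defensive.
Local Open Scope ring_scope.
Local Open Scope classical_set_scope.
Local Open Scope ereal_scope.

Section Iter.
Variable R : realType.
Local Notation W := (PilA.W R).
Notation leb := (@lebesgue_measure R).

Definition Phi (D : set _) j (G : W -> \bar R) : W -> \bar R :=
  fun w => integral (@lebesgue_measure R) D (fun t => G (upd w j t)).

Lemma measurable_Phi (G : W -> \bar R) (D : set _) j : measurable D ->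
  measurable_fun setT G -> (forall w, 0 <= G w) -> measurable_fun setT (Phi D j G).
Proof.
move=> mD mG G0.
pose g := fun p : W * R => G (upd p.1 j p.2).
have mg : measurable_fun setT g.
  exact: (measurableT_comp mG (measurable_upd j)).
have -> : Phi D j G = fubini_F leb (g \_ (setT `*` D)).
  apply/funext => w; rewrite /Phi /fubini_F [LHS]integral_mkcond.
  apply: eq_integral => y _; rewrite /patch /g /=.
  have -> : ((w, y) \in [set: W] `*` D) = (y \in D).
    apply/idP/idP => /set_mem H; apply/mem_set; first by case: H.
    by split.
  by [].
apply: measurable_fun_fubini_tonelli_F.
  have mX : measurable ([set: W] `*` D) by exact: measurableX.
  by apply/(measurable_restrictT g mX); exact: measurable_funTS.
move=> p; rewrite /patch; case: ifP => _; first exact: G0.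
by [].
Qed.

Variables (a : nat -> R) (len : R).
Definition Dm m := [set x | x \in `[a m, (a m + len)%R]].

Lemma iter_intS m F w : iter_int a len m.+1 F w = Phi (Dm m) m (iter_int a len m F) w.
Proof.
rewrite /Phi /=; congr (integral _ _ _); rewrite /Dm.
by apply/seteqP; split => x /=; rewrite ?inE.
Qed.

Lemma measurable_Dm m : measurable (Dm m).
Proof.
suff -> : Dm m = [set` Interval (BLeft (a m)) (BRight (a m + len)%R)] by exact: measurable_itv.
by apply/seteqP; split => x /=; rewrite /Dm /= ?inE.
Qed.

Lemma iter_int_ge0 (F : W -> \bar R) : (forall w, 0 <= F w) -> forall m w, 0 <= iter_int a len m F w.
Proof.
move=> F0; elim=> [|m IH] w //=.
by apply: integral_ge0 => t _.
Qed.

Lemma measurable_iter_int (F : W -> \bar R) : measurable_fun setT F -> (forall w, 0 <= F w) ->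
  forall m, measurable_fun setT (iter_int a len m F : W -> \bar R).
Proof.
move=> mF F0; elim=> [|m IH] //.
have -> : (iter_int a len m.+1 F : W -> \bar R) = Phi (Dm m) m (iter_int a len m F).
  by apply/funext => w; rewrite iter_intS.
apply: measurable_Phi => //.
  exact: measurable_Dm.
exact: iter_int_ge0.
Qed.

End Iter.

End PilB.
Import PilB.

Module PilC.
Import Order.TTheory GRing.Theory Num.Theory.
Set Implicit Arguments. Unset Strict Implicit. Unset Printing Implicit Defensive.
Local Open Scope ring_scope.
Local Open Scope classical_set_scope.
Local Open Scope ereal_scope.

Section Swap.
Variable R : realType.
Local Notation leb := (@lebesgue_measure R).

Lemma patch_int (H : R * R -> \bar R) (A B : set _) x :
  measurable A -> measurable B ->
  ((fun x => integral leb B (fun y => H (x, y))) \_ A) x =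
  integral leb setT (fun y => (H \_ (A `*` B)) (x, y)).
Proof.
move=> mA mB; rewrite /patch; case: ifPn => xA.
  rewrite integral_mkcond; apply: eq_integral => y _; rewrite /patch.
  case: ifPn => yB; case: ifPn => //.
  - by move=> /negP; case; apply/mem_set; split; apply/set_mem.
  - by move=> /set_mem [_ /= yB']; move/negP: yB; case; apply/mem_set.
rewrite -[LHS](integral0 leb setT); apply: eq_integral => y _.
case: ifPn => // /set_mem [/= xA' _]; move/negP: xA; case; exact/mem_set.
Qed.

Lemma swap_int (H : R * R -> \bar R) (A B : set _) :
  measurable A -> measurable B -> measurable_fun setT H -> (forall p, 0 <= H p) ->
  integral leb A (fun x => integral leb B (fun y => H (x, y))) =
  integral leb B (fun y => integral leb A (fun x => H (x, y))).
Proof.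
move=> mA mB mH H0.
pose H' := H \_ (A `*` B).
have mH' : measurable_fun setT H'.
  have mX : measurable (A `*` B) by exact: measurableX.
  by apply/(measurable_restrictT H mX); exact: measurable_funTS.
have H'0 : forall p, 0 <= H' p by move=> p; rewrite /H' /patch; case: ifP.
rewrite integral_mkcond.
transitivity (integral leb setT (fun x => integral leb setT (fun y => H' (x, y)))).
  by apply: eq_integral => x _; rewrite patch_int.
rewrite (fubini_tonelli (m1 := leb) (m2 := leb) H' mH' H'0).
rewrite [RHS]integral_mkcond; apply: eq_integral => y _.
pose Hs := fun p : R * R => H (p.2, p.1).
have := @patch_int Hs B A y mB mA.
rewrite /Hs /= => ->; apply: eq_integral => x _.
rewrite /H' /patch; case: ifPn => h1; case: ifPn => h2 //.
- by move/set_mem: h1 => [/= ? ?]; move/negP: h2; case; apply/mem_set; split.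
- by move/set_mem: h2 => [/= ? ?]; move/negP: h1; case; apply/mem_set; split.
Qed.
End Swap.

End PilC.
Import PilC.

Module PilD.
Import Order.TTheory GRing.Theory Num.Theory.
Set Implicit Arguments. Unset Strict Implicit. Unset Printing Implicit Defensive.
Local Open Scope ring_scope.
Local Open Scope classical_set_scope.
Local Open Scope ereal_scope.

Section Iter2.
Variable R : realType.
Local Notation W := (PilA.W R).
Local Notation leb := (@lebesgue_measure R).
Variables (a : nat -> R) (len : R).
Local Notation Dm := (Dm a len).
Local Notation iter_int := (iter_int a len).

Definition good (F : W -> \bar R) := measurable_fun setT F /\ forall w, 0 <= F w.

Lemma good_iter F m : good F -> good (iter_int m F).
Proof.
move=> [mF F0]; split; first exact: measurable_iter_int.
exact: iter_int_ge0.
Qed.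

Lemma mcomp_upd (F : W -> \bar R) (D : set _) (w : W) j : measurable_fun setT F ->
  measurable_fun D (fun t => F (upd w j t)).
Proof.
move=> mF; apply: measurable_funTS.
exact: (measurableT_comp mF (measurable_upd1 w j)).
Qed.

Lemma good_Phi F j m : good F -> good (Phi (Dm m) j F).
Proof.
move=> [mF F0]; split; first by apply: measurable_Phi => //; exact: measurable_Dm.
by move=> w; apply: integral_ge0.
Qed.

Lemma iter_int_le F G : good F -> good G -> (forall w, F w <= G w) ->
  forall m w, iter_int m F w <= iter_int m G w.
Proof.
move=> gF gG FG; elim=> [|m IH] w //.
rewrite !iter_intS /Phi; apply: ge0_le_integral => //.
- exact: measurable_Dm.
- by move=> t _; apply: (good_iter m gF).2.
- by apply: mcomp_upd; exact: (good_iter m gF).1.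
- by apply: mcomp_upd; exact: (good_iter m gG).1.
Qed.

Lemma leb_Dm m : (0 <= len)%R -> leb (Dm m) = len%:E.
Proof.
move=> len0.
have -> : Dm m = [set` Interval (BLeft (a m)) (BRight (a m + len)%R)].
  by apply/seteqP; split => x /=; rewrite /Dm /= ?inE.
rewrite lebesgue_measure_itv /= lte_fin.
case: ifPn => h; first by rewrite -EFinD addrAC subrr add0r.
congr (_%:E); apply/eqP; rewrite eq_le len0 /=.
by move: h; rewrite ltrDl -leNgt.
Qed.

Lemma iter_int_cst (c : R) m w : (0 <= c)%R -> (0 <= len)%R ->
  iter_int m (fun _ => c%:E) w = (c * len ^+ m)%:E.
Proof.
move=> c0 len0; elim: m w => [|m IH] w; first by rewrite /= expr0 mulr1.
rewrite iter_intS /Phi.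
under eq_integral => t _ do rewrite IH.
rewrite integral_cst; last exact: measurable_Dm.
transitivity ((c * len ^+ m)%:E * len%:E); first by congr (_ * _); exact: leb_Dm.
by rewrite -EFinM exprSr mulrA.
Qed.

Lemma iter_int0 m w : iter_int m (fun _ => 0) w = 0.
Proof.
elim: m w => [|m IH] w //.
rewrite iter_intS /Phi.
under eq_integral => t _ do rewrite IH.
exact: integral0.
Qed.

Lemma iter_intD F G m w : good F -> good G ->
  iter_int m (fun v => F v + G v) w = iter_int m F w + iter_int m G w.
Proof.
move=> gF gG; elim: m w => [|m IH] w //.
rewrite !iter_intS /Phi.
under eq_integral => t _ do rewrite IH.
apply: ge0_integralD.
- exact: measurable_Dm.
- by move=> t _; apply: (good_iter m gF).2.
- by apply: mcomp_upd; exact: (good_iter m gF).1.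
- by move=> t _; apply: (good_iter m gG).2.
- by apply: mcomp_upd; exact: (good_iter m gG).1.
Qed.

Lemma good_sum (I : Type) (s : seq I) (Fs : I -> W -> \bar R) :
  (forall i, good (Fs i)) -> good (fun w => \sum_(i <- s) Fs i w).
Proof.
move=> gFs; split.
  by apply: emeasurable_sum => i; exact: (gFs i).1.
by move=> w; apply: sume_ge0 => i _; exact: (gFs i).2.
Qed.

Lemma iter_int_sum (I : Type) (s : seq I) (Fs : I -> W -> \bar R) m w :
  (forall i, good (Fs i)) ->
  iter_int m (fun w => \sum_(i <- s) Fs i w) w = \sum_(i <- s) iter_int m (Fs i) w.
Proof.
move=> gFs; elim: s => [|x s IH].
  rewrite big_nil.
  under [X in iter_int m X w]funext => v do rewrite big_nil.
  exact: iter_int0.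
rewrite big_cons -IH.
under [X in iter_int m X w]funext => v do rewrite big_cons.
by apply: iter_intD => //; exact: good_sum.
Qed.

End Iter2.

End PilD.
Import PilD.

Module PilE.
Import Order.TTheory GRing.Theory Num.Theory.
Set Implicit Arguments. Unset Strict Implicit. Unset Printing Implicit Defensive.
Local Open Scope ring_scope.
Local Open Scope classical_set_scope.
Local Open Scope ereal_scope.

Section Iter3.
Variable R : realType.
Local Notation W := (PilA.W R).
Local Notation leb := (@lebesgue_measure R).
Variables (a : nat -> R) (len : R).
Local Notation Dm := (Dm a len).
Local Notation iter_int := (iter_int a len).
Local Notation good := (@good R).

Lemma upd_comm (w : nat -> R) m l s t : l != m ->
  upd (upd w m s) l t = upd (upd w l t) m s.
Proof.
move=> lm; apply/funext => i; rewrite /upd.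
case: (eqVneq i l) => [->|il]; last by [].
by rewrite (negbTE lm).
Qed.

Lemma upd_same (w : nat -> R) m s t : upd (upd w m s) m t = upd w m t.
Proof. by apply/funext => i; rewrite /upd; case: ifP => // ->. Qed.

Lemma measurable_upd2 (w : W) m l :
  measurable_fun [set: (R * R)%type] (fun p : R * R => (upd (upd w m p.1) l p.2 : W)).
Proof.
apply: measurable_toW => // i; rewrite /upd.
case: (i == l); first exact: measurable_snd.
case: (i == m); first exact: measurable_fst.
exact: measurable_cst.
Qed.

Lemma iter_commute G l m w : good G -> (m <= l)%N ->
  iter_int m (Phi (Dm l) l G) w = Phi (Dm l) l (iter_int m G) w.
Proof.
move=> gG; elim: m w => [|m IH] w lm; first by [].
rewrite iter_intS /Phi.
under eq_integral => s _ do rewrite IH ?(ltnW lm) // /Phi.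
rewrite /Phi.
under [RHS]eq_integral => t _ do rewrite iter_intS /Phi.
have lm' : l != m by rewrite neq_ltn lm orbT.
under [RHS]eq_integral => t _ do under eq_integral => s _ do rewrite -(upd_comm _ _ _ lm').
pose H := fun p : R * R => iter_int m G (upd (upd w m p.1) l p.2).
have -> : (fun x => integral leb (Dm l) (fun t => iter_int m G (upd (upd w m x) l t))) =
  (fun x => integral leb (Dm l) (fun t => H (x, t))) by [].
have -> : (fun t => integral leb (Dm m) (fun s => iter_int m G (upd (upd w m s) l t))) =
  (fun t => integral leb (Dm m) (fun s => H (s, t))) by [].
apply: swap_int; [exact: measurable_Dm | exact: measurable_Dm | | ].
  exact: (measurableT_comp (good_iter a len m gG).1 (measurable_upd2 w m l)).
by move=> p; exact: (good_iter a len m gG).2.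
Qed.

End Iter3.

Section Iter4.
Variable R : realType.
Local Notation W := (PilA.W R).
Local Notation leb := (@lebesgue_measure R).
Variables (a : nat -> R) (len : R).
Local Notation Dm := (Dm a len).
Local Notation iter_int := (iter_int a len).
Local Notation good := (@good R).

Lemma iter_pull G j m w : good G -> (j < m)%N -> (0 <= len)%R ->
  iter_int m (Phi (Dm j) j G) w = len%:E * iter_int m G w.
Proof.
move=> gG + len0; elim: m w => [|m IH] w // ltjm.
rewrite iter_intS [in RHS]iter_intS /Phi.
case: (ltngtP j m) => [jm| |jm].
- under eq_integral => s _ do rewrite IH //.
  apply: ge0_integralZl => //.
  + exact: measurable_Dm.
  + by apply: mcomp_upd; exact: (good_iter a len m gG).1.
  + by move=> t _; apply: (good_iter a len m gG).2.
- by move=> mj; move: ltjm; rewrite ltnS leqNgt mj.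
- subst j.
  under eq_integral => s _ do rewrite (iter_commute a len _ gG (leqnn m)) /Phi.
  under eq_integral => s _ do under eq_integral => t _ do rewrite upd_same.
  have hc : forall X : \bar R, integral leb (Dm m) (fun _ => X) = X * len%:E.
    move=> X; transitivity (integral leb (Dm m) (cst X)); first reflexivity.
    rewrite integral_cst; last exact: measurable_Dm.
    congr (_ * _); exact: leb_Dm.
  by rewrite hc muleC.
Qed.

Lemma iter_bound G j m w (eps : R) : good G -> (j < m)%N -> (0 < len)%R -> (0 <= eps)%R ->
  (forall v, Phi (Dm j) j G v <= eps%:E) -> iter_int m G w <= (eps * len ^+ m.-1)%:E.
Proof.
move=> gG jm len0 eps0 Hb.
have len0' : (0 <= len)%R by exact: ltW.
have h2 : iter_int m (Phi (Dm j) j G) w <= iter_int m (fun _ => eps%:E) w.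
  have gc : good (fun _ : W => eps%:E).
    by split; [exact: measurable_cst | move=> _; rewrite lee_fin].
  exact: (iter_int_le a len (good_Phi a len j j gG) gc Hb).
rewrite (iter_pull w gG jm len0') (@iter_int_cst R a len eps m w eps0 len0') in h2.
case: m jm h2 => [//|m] _ h2 /=.
rewrite -(@lee_pmul2l _ len%:E) // ?lte_fin //.
by rewrite -EFinM mulrCA -exprS.
Qed.

End Iter4.

End PilE.
Import PilE.

Module PilF.
Import Order.TTheory GRing.Theory Num.Theory.
Set Implicit Arguments. Unset Strict Implicit. Unset Printing Implicit Defensive.
Local Open Scope ring_scope.

Section Comb.
Variable R : realType.

Lemma ex_max_seq (T : eqType) (s : seq T) (f : T -> R) x0 : x0 \in s ->
  exists2 x, x \in s & forall y, y \in s -> f y <= f x.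
Proof.
elim: s x0 => [//|y s IH] x0 _.
case: s IH => [|z s] IH.
  by exists y; rewrite ?mem_head // => y'; rewrite inE => /eqP ->.
have [x xs hx] := IH z (mem_head _ _).
case: (lerP (f y) (f x)) => hyx.
  exists x; first by rewrite inE xs orbT.
  by move=> y'; rewrite inE => /orP [/eqP ->|]; [| exact: hx].
exists y; first exact: mem_head.
move=> y'; rewrite inE => /orP [/eqP ->//|/hx h]. 
exact: (le_trans h (ltW hyx)).
Qed.

Lemma ex_max (T : finType) (P : pred T) (f : T -> R) x0 : P x0 ->
  exists2 x, P x & forall y, P y -> f y <= f x.
Proof.
move=> Px0.
have := @ex_max_seq T [seq x <- enum T | P x] f x0.
rewrite mem_filter Px0 mem_enum => /(_ isT) [x].
rewrite mem_filter => /andP [Px _] hx.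
by exists x => // y Py; apply: hx; rewrite mem_filter Py mem_enum.
Qed.

Lemma ex_min (T : finType) (P : pred T) (f : T -> R) x0 : P x0 ->
  exists2 x, P x & forall y, P y -> f x <= f y.
Proof.
move=> Px0; have [x Px hx] := ex_max (fun x => - f x) Px0.
by exists x => // y /hx; rewrite lerN2.
Qed.

Variable n : nat.
Variable p : nat -> R.

Definition lowp (j : 'I_n) (t : R) (w : nat -> R) (y : sol n) : bool :=
  [forall x : sol n, ((~~ x j) && (dotp w x <= t)) ==> (dotp p x < dotp p y)].

Definition Ev (j : 'I_n) (t e : R) (w : nat -> R) : bool :=
  [exists y : sol n, [&& y j, lowp j t w y & dotp w y <= t + e]] &&
  [forall y : sol n, (y j && lowp j t w y) ==> (t < dotp w y)].

Lemma dotp0 (w : nat -> R) : dotp w [ffun _ : 'I_n => false] = 0.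
Proof. by rewrite /dotp big1 // => i _; rewrite ffunE mul0r. Qed.

Lemma dotp_le (x y : sol n) : (forall i : 'I_n, p i >= 0) ->
  (forall i, y i ==> x i) -> dotp p y <= dotp p x.
Proof.
move=> p0 yx; rewrite /dotp; apply: ler_sum => i _.
have := yx i; case: (y i); case: (x i) => //= _.
by rewrite mul0r mul1r.
Qed.

Lemma key (w : nat -> R) (t e : R) : (forall i : 'I_n, p i >= 0) -> 0 <= t ->
  [exists x : sol n, [&& pareto_optimal p w x, t < dotp w x & dotp w x <= t + e]] ->
  [exists j, Ev j t e w].
Proof.
move=> p0 t0 /existsP [x0 /and3P [par0 tx0 x0e]].
have w00 : dotp w [ffun _ : 'I_n => false] <= t by rewrite dotp0.
have [xs /= wxs xsmax] := @ex_max _ (fun x : sol n => dotp w x <= t) (dotp p) _ w00.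
have pxs : dotp p xs < dotp p x0.
  rewrite ltNge; apply/negP => px0.
  move/forallP: par0 => /(_ xs); rewrite /dominates px0 /=.
  have -> : dotp w xs <= dotp w x0 by apply: ltW; exact: le_lt_trans wxs tx0.
  by rewrite (le_lt_trans wxs tx0) orbT.
have [ys /= pys ysmin] := @ex_min _ (fun y : sol n => dotp p xs < dotp p y) (dotp w) x0 pxs.
have wys : dotp w ys <= t + e by exact: le_trans (ysmin _ pxs) x0e.
have tys : t < dotp w ys.
  rewrite ltNge; apply/negP => /xsmax h.
  by move: (lt_le_trans pys h); rewrite ltxx.
have [j hj] : exists j : 'I_n, ys j && ~~ xs j.
  apply/existsP; case: (boolP [exists j, ys j && ~~ xs j]) => // /existsPn H; exfalso.
  have : dotp p ys <= dotp p xs.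
    apply: dotp_le => // i; have := H i; rewrite negb_and negbK.
    by case: (ys i).
  by rewrite leNgt pys.
move/andP: hj => [ysj xsj].
have lowys : lowp j t w ys.
  apply/forallP => x; apply/implyP => /andP [_ wx].
  exact: le_lt_trans (xsmax _ wx) pys.
apply/existsP; exists j; apply/andP; split.
  by apply/existsP; exists ys; rewrite ysj lowys wys.
apply/forallP => y; apply/implyP => /andP [yj /forallP /(_ xs)].
rewrite xsj wxs /= => pxy.
rewrite ltNge; apply/negP => wy.
have := le_trans (ysmin _ pxy) wy => /xsmax h.
by move: (lt_le_trans pys h); rewrite ltxx.
Qed.

End Comb.

End PilF.
Import PilF.

Module PilG.
Import Order.TTheory GRing.Theory Num.Theory.
Set Implicit Arguments. Unset Strict Implicit. Unset Printing Implicit Defensive.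
Local Open Scope ring_scope.

Section MB.
Variable R : realType.
Local Notation W := (PilA.W R).
Definition mb (f : W -> bool) := measurable_fun setT f.

Lemma mb_cst b : mb (fun _ => b).
Proof. exact: measurable_cst. Qed.

Lemma mb_and f g : mb f -> mb g -> mb (fun w => f w && g w).
Proof. exact: measurable_and. Qed.

Lemma mb_or f g : mb f -> mb g -> mb (fun w => f w || g w).
Proof. exact: measurable_or. Qed.

Lemma mb_neg f : mb f -> mb (fun w => ~~ f w).
Proof. exact: measurable_neg. Qed.

Lemma mb_imply f g : mb f -> mb g -> mb (fun w => f w ==> g w).
Proof.
move=> mf mg; have -> : (fun w => f w ==> g w) = (fun w => ~~ f w || g w).
  by apply/funext => w; rewrite implybE.
by apply: mb_or => //; exact: mb_neg.
Qed.

Lemma mb_all (T : Type) (P : T -> W -> bool) s : (forall x, mb (P x)) ->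
  mb (fun w => all (fun x => P x w) s).
Proof.
move=> mP; elim: s => [|x s IH] /=; first exact: mb_cst.
exact: mb_and.
Qed.

Lemma mb_has (T : Type) (P : T -> W -> bool) s : (forall x, mb (P x)) ->
  mb (fun w => has (fun x => P x w) s).
Proof.
move=> mP; elim: s => [|x s IH] /=; first exact: mb_cst.
exact: mb_or.
Qed.

Lemma mb_forall (T : finType) (P : T -> W -> bool) : (forall x, mb (P x)) ->
  mb (fun w => [forall x, P x w]).
Proof.
move=> mP; have -> : (fun w => [forall x, P x w]) = (fun w => all (fun x => P x w) (enum T)).
  apply/funext => w; apply/forallP/allP => H x //; apply: H; exact: mem_enum.
exact: mb_all.
Qed.

Lemma mb_exists (T : finType) (P : T -> W -> bool) : (forall x, mb (P x)) ->
  mb (fun w => [exists x, P x w]).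
Proof.
move=> mP; have -> : (fun w => [exists x, P x w]) = (fun w => has (fun x => P x w) (enum T)).
  apply/funext => w; apply/existsP/hasP => [[x Px]|[x _ Px]]; by exists x; rewrite ?mem_enum.
exact: mb_has.
Qed.

Lemma mdot n (x : sol n) : measurable_fun setT (fun w : W => dotp w x).
Proof.
rewrite /dotp; apply: measurable_sum => i.
apply: measurable_funM; first exact: measurable_cst.
exact: measurable_coord.
Qed.

Lemma mb_le (f g : W -> R) : measurable_fun setT f -> measurable_fun setT g -> mb (fun w => f w <= g w).
Proof. exact: measurable_fun_ler. Qed.

Lemma mb_lt (f g : W -> R) : measurable_fun setT f -> measurable_fun setT g -> mb (fun w => f w < g w).
Proof. exact: measurable_fun_ltr. Qed.

End MB.

End PilG.
Import PilG.

Module PilH.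
Import Order.TTheory GRing.Theory Num.Theory.
Set Implicit Arguments. Unset Strict Implicit. Unset Printing Implicit Defensive.
Local Open Scope ring_scope.

Section MB2.
Variable R : realType.
Local Notation W := (PilA.W R).
Variable n : nat.
Variable p : nat -> R.

Lemma mb_lowp (j : 'I_n) t (y : sol n) : mb (fun w : W => lowp p j t w y).
Proof.
rewrite /lowp; apply: mb_forall => x; apply: mb_imply.
  apply: mb_and; first exact: mb_cst.
  by apply: mb_le; [exact: mdot | exact: measurable_cst].
exact: mb_cst.
Qed.

Lemma mb_Ev (j : 'I_n) t e : mb (fun w : W => Ev p j t e w).
Proof.
rewrite /Ev; apply: mb_and.
  apply: mb_exists => y; apply: mb_and; first exact: mb_cst.
  apply: mb_and; first exact: mb_lowp.
  by apply: mb_le; [exact: mdot | exact: measurable_cst].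
apply: mb_forall => y; apply: mb_imply.
  by apply: mb_and; [exact: mb_cst | exact: mb_lowp].
by apply: mb_lt; [exact: measurable_cst | exact: mdot].
Qed.

Lemma mb_pareto (x : sol n) : mb (fun w : W => pareto_optimal p w x).
Proof.
rewrite /pareto_optimal; apply: mb_forall => y; apply: mb_neg.
rewrite /dominates; apply: mb_and; first exact: mb_cst.
apply: mb_and; first by apply: mb_le; exact: mdot.
apply: mb_or; first exact: mb_cst.
by apply: mb_lt; exact: mdot.
Qed.

Lemma mb_nonempty k i : mb (fun w : W => interval_nonempty n p w k i).
Proof.
rewrite /interval_nonempty; apply: mb_exists => x.
apply: mb_and; first apply: mb_and.
- exact: mb_pareto.
- by apply: mb_lt; [exact: measurable_cst | exact: mdot].
- by apply: mb_le; [exact: mdot | exact: measurable_cst].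
Qed.

End MB2.

End PilH.
Import PilH.

Module PilI.
Import Order.TTheory GRing.Theory Num.Theory.
Set Implicit Arguments. Unset Strict Implicit. Unset Printing Implicit Defensive.
Local Open Scope ring_scope.
Local Open Scope classical_set_scope.

Section Sec.
Variable R : realType.
Local Notation W := (PilA.W R).
Variable n : nat.
Variable p : nat -> R.

Definition ind (b : W -> bool) : W -> \bar R := fun w => if b w then 1%:E else 0%:E.

Lemma good_ind b : mb b -> good (ind b).
Proof.
move=> mbb; split; first by apply: measurable_fun_ifT => //; exact: measurable_cst.
by move=> w; rewrite /ind; case: (b w).
Qed.

Lemma dotp_upd (w : nat -> R) (j : 'I_n) s (y : sol n) :
  dotp (upd w j s) y = (y j)%:R * s + dotp (upd w j 0) y.
Proof.
rewrite /dotp (bigD1 j) //= [X in _ = _ + X](bigD1 j) //= /upd eqxx mulr0 add0r.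
congr (_ + _); apply: eq_bigr => i ij.
by have -> : (nat_of_ord i == nat_of_ord j) = false by apply/negbTE.
Qed.

Lemma lowp_upd (w : nat -> R) (j : 'I_n) t s (y : sol n) :
  lowp p j t (upd w j s) y = lowp p j t (upd w j 0) y.
Proof.
apply: eq_forallb => x; rewrite dotp_upd.
by case: (x j) => //=; rewrite mul0r add0r.
Qed.

Lemma Ev_section (w : nat -> R) (j : 'I_n) t e :
  exists al : R, forall s, Ev p j t e (upd w j s) -> al < s <= al + e.
Proof.
pose L := fun y : sol n => y j && lowp p j t (upd w j 0) y.
pose c := fun y : sol n => dotp (upd w j 0) y.
case: (boolP [exists y, L y]) => [/existsP [y0 Ly0]|/existsPn HL]; last first.
  exists 0 => s /andP [/existsP [y /and3P [yj ly _]] _].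
  by move: (HL y); rewrite /L yj -(lowp_upd w j t s) ly.
have [y1 Ly1 y1min] := ex_min c Ly0.
exists (t - c y1) => s /andP [/existsP [y /and3P [yj ly wy]] /forallP H].
move: (H y1); move/andP: Ly1 => [y1j ly1].
rewrite y1j (lowp_upd w j t s) ly1 /= dotp_upd y1j mul1r => ty1.
rewrite ltrBlDr ty1 /=.
have Ly : L y by rewrite /L yj -(lowp_upd w j t s).
move: wy; rewrite dotp_upd yj mul1r => wy.
have := y1min _ Ly; rewrite -/(c y) => h.
rewrite addrAC lerBrDr.
apply: le_trans wy; rewrite lerD2l; exact: h.
Qed.

End Sec.

Section Sec2.
Variable R : realType.
Local Notation W := (PilA.W R).
Local Notation leb := (@lebesgue_measure R).
Variable n : nat.
Variable p : nat -> R.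
Local Open Scope ereal_scope.

Lemma Ev_int (a : nat -> R) len (w : W) (j : 'I_n) t e : (0 <= e)%R ->
  Phi (Dm a len j) j (ind (fun v => Ev p j t e v)) w <= e%:E.
Proof.
move=> e0; have [al Hal] := Ev_section p w j t e.
rewrite /Phi.
pose A : set R := [set` Interval (BRight al) (BRight (al + e)%R)].
have mA : measurable A by exact: measurable_itv.
apply: (@le_trans _ _ (integral leb (Dm a len j) (fun s => (\1_A s)%:E))).
  apply: ge0_le_integral => //.
  - exact: measurable_Dm.
  - by move=> s _; rewrite /ind; case: ifP.
  - by apply: mcomp_upd; exact: (good_ind (mb_Ev p j t e)).1.
  - by apply/measurable_EFinP; exact: measurable_indic.
  - move=> s _; rewrite /ind; case: ifP => [h|_]; last by rewrite lee_fin.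
    rewrite indicE mem_set //; have := Hal s h.
    by rewrite /A /= in_itv /=.
rewrite integral_indic //; last exact: measurable_Dm.
apply: (@le_trans _ _ (leb A)).
  apply: le_measure; rewrite ?inE //.
    by apply: measurableI => //; exact: measurable_Dm.
rewrite /A lebesgue_measure_itv /= lte_fin.
case: ifPn => _; last by rewrite lee_fin.
by rewrite -EFinD addrAC subrr add0r.
Qed.

End Sec2.

End PilI.
Import PilI.

Module PilJ.
Import Order.TTheory GRing.Theory Num.Theory.
Set Implicit Arguments. Unset Strict Implicit. Unset Printing Implicit Defensive.
Local Open Scope ring_scope.
Local Open Scope classical_set_scope.

Section Final.
Variable R : realType.
Local Notation W := (PilA.W R).
Variable n : nat.
Variable p : nat -> R.
Variable k : nat.

Definition tt_ (i : nat) : R := (n * i)%:R / k%:R.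
Definition ee : R := n%:R / k%:R.

Lemma good_cstE (c : R) : (0 <= c)%R -> good (fun _ : W => c%:E).
Proof. by move=> c0; split; [exact: measurable_cst | move=> _; rewrite lee_fin]. Qed.

Lemma good_add1 (F : W -> \bar R) : good F -> good (fun w => 1%:E + F w)%E.
Proof.
move=> [mF F0]; split; last by move=> w; apply: adde_ge0 => //; rewrite lee_fin.
by apply: emeasurable_funD => //; exact: measurable_cst.
Qed.

Lemma Xk_eq (w : W) :
  ((Xk n p w k)%:R)%:E = (1%:E + \sum_(i < k) ind (fun v => interval_nonempty n p v k i) w)%E.
Proof.
rewrite /Xk natrD EFinD addeC; congr (_ + _)%E.
rewrite -sum1_card big_mkcond /= natr_sum -sumEFin.
apply: eq_bigr => i _; rewrite /ind.
have -> : (i \in [set i0 : 'I_k | interval_nonempty n p w k i0]) = interval_nonempty n p w k i.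
  by apply/idP/idP => [/set_mem //| h]; apply/mem_set.
by case: (interval_nonempty n p w k i).
Qed.

Lemma nonempty_Ev (w : W) (i : 'I_k) : (forall j : 'I_n, 0 <= p j) ->
  interval_nonempty n p w k i -> [exists j : 'I_n, Ev p j (tt_ i) ee w].
Proof.
move=> p0 hne; apply: key => //.
  by rewrite /tt_ divr_ge0.
move: hne; rewrite /interval_nonempty.
have -> : (n * i.+1)%:R / k%:R = tt_ i + ee.
  by rewrite /tt_ /ee mulnS natrD mulrDl addrC.
move/existsP => [x hx]; apply/existsP; exists x; by rewrite andbA.
Qed.

End Final.

End PilJ.
Import PilJ.

Module PilK.
Import Order.TTheory GRing.Theory Num.Theory.
Local Open Scope ring_scope.

Lemma final_real (R : realType) (phi : R) n k : 0 < phi ->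
  phi ^+ n * (1 * phi^-1 ^+ n + ((n%:R / k%:R) * phi^-1 ^+ n.-1) *+ n *+ k) <= (n ^ 2)%:R * phi + 1.
Proof.
move=> phi0.
rewrite mul1r mulrDr -exprMn mulfV ?gt_eqF // expr1n addrC lerD2r.
case: k => [|k].
  rewrite mulr0n mulr0; apply: mulr_ge0; last exact: ltW.
  by rewrite ler0n.
case: n => [|m].
  rewrite mulr0n mul0rn mulr0; apply: mulr_ge0; last exact: ltW.
  by rewrite ler0n.
rewrite le_eqVlt; apply/orP; left; apply/eqP.
rewrite -mulrnA -(mulr_natr _ (m.+1 * k.+1)) exprVn exprS natrX natrM.
have hm : phi ^+ m != 0 by rewrite expf_neq0 // gt_eqF.
have hk : (k.+1)%:R != 0 :> R by rewrite pnatr_eq0.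
rewrite [m.+1.-1]/=.
field.
by rewrite hm nat1r.
Qed.


End PilK.
Import PilK.

Local Open Scope ring_scope.

Theorem lemma2p5 (R : realType) (n : nat) (phi : R) (p a : nat -> R) (k : nat) :
  1 <= phi ->
  (forall i, (i < n)%N -> 0 <= p i) ->
  (forall i, (i < n)%N -> 0 <= a i /\ a i + phi^-1 <= 1) ->
  (expect_unif n a phi (fun w => ((Xk n p w k)%:R)%:E) <= ((n ^ 2)%:R * phi + 1)%:E)%E.
Proof.
move=> phi1 p0 _.
have phi0 : 0 < phi by exact: lt_le_trans ltr01 phi1.
have len0 : 0 < phi^-1 by rewrite invr_gt0.
have p0' : forall j : 'I_n, 0 <= p j by move=> j; apply: p0.
have ee0 : 0 <= ee R n k by rewrite /ee divr_ge0.
pose Ind (i : 'I_k) (j : 'I_n) := ind (fun v : PilA.W R => Ev p j (tt_ R n k i) (ee R n k) v).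
pose U := fun w : PilA.W R => (1%:E + \sum_(i < k) \sum_(j < n) Ind i j w)%E.
pose X' := fun w : PilA.W R => (1%:E + \sum_(i < k) ind (fun v : PilA.W R => interval_nonempty n p v k i) w)%E.
rewrite /expect_unif.
have -> : (fun w => ((Xk n p w k)%:R)%:E) = X'.
  by apply/funext => w; rewrite /X' Xk_eq.
have gInd : forall i j, good (Ind i j) by move=> i j; apply: good_ind; exact: mb_Ev.
have gX' : good X'.
  apply: good_add1; apply: good_sum => i; apply: good_ind; exact: mb_nonempty.
have gS : forall i, good (fun w => \sum_(j < n) Ind i j w) by move=> i; exact: good_sum.
have gU : good U by apply: good_add1; apply: good_sum => i; exact: gS.
have le1 : (iter_int a phi^-1 n X' (fun _ => 0%R) <= iter_int a phi^-1 n U (fun _ => 0%R))%E.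
  apply: iter_int_le gX' gU _ _ _ => w.
  rewrite /X' /U leeD2l //; apply: lee_sum => i _.
  rewrite /ind; case: ifP => h; last by apply: sume_ge0 => j _; exact: (gInd i j).2.
  have /existsP [j hj] := nonempty_Ev p0' h.
  rewrite (bigD1 j) //= {1}/Ind /ind hj.
  apply: leeDl; apply: sume_ge0 => j' _; exact: (gInd i j').2.
have eqU : iter_int a phi^-1 n U (fun _ => 0%R) =
    ((phi^-1 ^+ n)%:E + \sum_(i < k) \sum_(j < n) iter_int a phi^-1 n (Ind i j) (fun _ => 0%R))%E.
  rewrite /U iter_intD; last 2 first.
  - exact: good_cstE.
  - by apply: good_sum => i; exact: gS.
  rewrite iter_int_cst // ?(ltW len0) // mul1r iter_int_sum //; congr (_ + _)%E.
  by apply: eq_bigr => i _; rewrite iter_int_sum.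
have le2 : (\sum_(i < k) \sum_(j < n) iter_int a phi^-1 n (Ind i j) (fun _ => 0%R) <=
    \sum_(i < k) \sum_(j < n) ((ee R n k) * phi^-1 ^+ n.-1)%:E)%E.
  apply: lee_sum => i _; apply: lee_sum => j _.
  apply: (@iter_bound R a phi^-1 (Ind i j) j); [exact: gInd | exact: ltn_ord | exact: len0 | exact: ee0 | ].
  by move=> v; apply: Ev_int.
rewrite !sumEFin !sumr_const !card_ord in le2.
apply: (@le_trans _ _ ((phi ^+ n)%:E * ((phi^-1 ^+ n)%:E + ((ee R n k * phi^-1 ^+ n.-1) *+ n *+ k)%:E)))%E.
  apply: lee_wpmul2l; first by rewrite lee_fin exprn_ge0 // ltW.
  apply: (le_trans le1); rewrite eqU; exact: leeD2l.
rewrite -EFinD -EFinM lee_fin.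
have := @final_real R phi n k phi0.
by rewrite mul1r /ee.
Qed.
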